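(* Let $G$ be a complete geometric graph and let $B$ be a blocker for $\mathcal{T}_{\leq 4}(G)$. Let $b$ be a boundary vertex of $G$, and let $[a,b]$ and $[b,c]$ be the two boundary edges of $G$ containing $b$. If at least one of $[a,b]$, $[b,c]$ is not in $B$, then $b$ is a leaf of $B$ (i.e., has degree exactly 1 in $B$).
   Context: A geometric graph is a graph whose vertices are points in the plane in general position (no three collinear) and whose edges are straight segments between pairs of vertices; $G$ is complete if all pairs of vertices are joined. Boundary vertices and boundary edges of $G$ are those lying on the boundary of the convex hull of $V(G)$. $\mathcal{T}_{\leq k}(G)$ denotes the family of all simple (non-crossing) spanning trees of $G$ of (graph) diameter at most $k$. A subgraph $B$ blocks a family $\mathcal{F}$ of subgraphs if it shares at least one edge with every member of $\mathcal{F}$; a blocker of $\mathcal{F}$ is a subgraph that blocks $\mathcal{F}$ and has the smallest possible number of edges among all subgraphs blocking $\mathcal{F}$. *)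

(* Defs.v *)
From mathcomp Require Import all_boot all_order all_algebra.
From mathcomp Require Import reals.
Set Implicit Arguments. Unset Strict Implicit. Unset Printing Implicit Defensive.
Import Order.TTheory GRing.Theory Num.Theory.
Local Open Scope ring_scope.

Section GeomGraph.
Variables (R : realType) (T : finType) (p : T -> R * R).

Definition det3 (a b c : R * R) : R :=
  (b.1 - a.1) * (c.2 - a.2) - (b.2 - a.2) * (c.1 - a.1).

Definition general_position : Prop :=
  injective p /\
  forall x y z : T, x != y -> y != z -> x != z -> det3 (p x) (p y) (p z) != 0.

Definition on_segment (a b z : R * R) : Prop :=
  exists t : R, 0 <= t <= 1 /\
    z = ((1 - t) * a.1 + t * b.1, (1 - t) * a.2 + t * b.2).

(* edges are 2-element vertex sets; the complete geometric graph G on T *)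
Definition complete_edges : {set {set T}} := [set e : {set T} | #|e| == 2%N].

Definition adj (E : {set {set T}}) : rel T := fun x y => [set x; y] \in E.

Definition connected_sp (E : {set {set T}}) : Prop :=
  forall x y : T, connect (adj E) x y.

Definition acyclic (E : {set {set T}}) : Prop :=
  ~ exists s : seq T, [/\ uniq s, (3 <= size s)%N & cycle (adj E) s].

Definition spanning_tree (E : {set {set T}}) : Prop :=
  E \subset complete_edges /\ connected_sp E /\ acyclic E.

Definition diam_le (E : {set {set T}}) (k : nat) : Prop :=
  forall x y : T, exists s : seq T,
    [/\ (size s <= k)%N, path (adj E) x s & last x s = y].

(* simple = non-crossing: edges with no common endpoint are disjoint segments
   (in general position, edges sharing an endpoint meet only there) *)
Definition simple_geo (E : {set {set T}}) : Prop :=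
  forall x y u v : T, [set x; y] \in E -> [set u; v] \in E ->
    [disjoint [set x; y] & [set u; v]] ->
    ~ exists z, on_segment (p x) (p y) z /\ on_segment (p u) (p v) z.

Definition T_le4 (E : {set {set T}}) : Prop :=
  [/\ spanning_tree E, simple_geo E & diam_le E 4].

Definition blocks (B : {set {set T}}) (F : {set {set T}} -> Prop) : Prop :=
  forall E, F E -> exists e, e \in B :&: E.

Definition blocker (F : {set {set T}} -> Prop) (B : {set {set T}}) : Prop :=
  [/\ B \subset complete_edges, blocks B F &
      forall B' : {set {set T}}, B' \subset complete_edges -> blocks B' F -> (#|B| <= #|B'|)%N].

Definition boundary_vertex (b : T) : Prop :=
  ~ exists w : T -> R,
    [/\ forall x, 0 <= w x, w b = 0, \sum_x w x = 1 &
        p b = (\sum_x w x * (p x).1, \sum_x w x * (p x).2)].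

(* boundary edge: [x,y] is a convex-hull edge, i.e. all vertices lie
   (weakly) on one side of the line xy *)
Definition boundary_edge (x y : T) : Prop :=
  x != y /\
  ((forall z, 0 <= det3 (p x) (p y) (p z)) \/
   (forall z, det3 (p x) (p y) (p z) <= 0)).

Definition degree (B : {set {set T}}) (b : T) : nat := #|[set e in B | b \in e]|.

End GeomGraph.

(* Main.v *)
Require Import Defs.
From mathcomp Require Import all_boot all_order all_algebra.
From mathcomp Require Import reals.
From mathcomp.algebra_tactics Require Import ring lra.
From mathcomp Require Import zify.
Set Implicit Arguments. Unset Strict Implicit. Unset Printing Implicit Defensive.
Import Order.TTheory GRing.Theory Num.Theory.

Module Aux.

Lemma set2_eq (T : finType) (u w v z : T) : v != z ->
  [set u; w] = [set v; z] -> (u = v /\ w = z) \/ (u = z /\ w = v).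
Proof.
move=> nvz E.
have hu : u \in [set v; z] by rewrite -E !inE eqxx.
have hv : v \in [set u; w] by rewrite E !inE eqxx.
have hz : z \in [set u; w] by rewrite E !inE eqxx orbT.
move: hu hv hz; rewrite !inE.
case: (eqVneq u v) => [->|nuv] /=.
  case: (eqVneq z v) => [ezv|nzv]; first by rewrite ezv eqxx in nvz.
  move=> _ _ /eqP ->; by left.
case: (eqVneq u z) => [->|nuz] //= _.
case: (eqVneq v z) => [evz|_] /=; first by rewrite evz eqxx in nvz.
move=> /eqP -> _; by right.
Qed.

Section PTree.
Variables (T : finType) (r : T) (par : T -> T).
Hypothesis par_neq : forall v, v != r -> par v != v.
Hypothesis par_dep : forall v, v != r -> par v != r -> par (par v) = r.

Definition ptree : {set {set T}} := [set [set v; par v] | v in [set~ r]].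

Lemma adj_sym (E : {set {set T}}) u w : adj E u w = adj E w u.
Proof. by rewrite /adj setUC. Qed.

Lemma adj_par v : v != r -> adj ptree v (par v).
Proof. by move=> nv; apply/imsetP; exists v; rewrite // !inE. Qed.

Lemma adj_ptree u w : adj ptree u w ->
  (u != r /\ w = par u) \/ (w != r /\ u = par w).
Proof.
case/imsetP=> v; rewrite !inE => nv E.
have nvp : v != par v by rewrite eq_sym par_neq.
have := set2_eq nvp E.
by case=> [[-> ->]|[-> ->]]; [left|right]; split.
Qed.

Definition dep v := if v == r then 0 else if par v == r then 1 else 2.

Lemma dep_par v : v != r -> dep (par v) < dep v.
Proof.
move=> nv; rewrite /dep (negbTE nv).
case: (eqVneq (par v) r) => [e|np]; first by [].
by rewrite par_dep // eqxx.
Qed.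

Lemma dep_le2 v : dep v <= 2.
Proof. by rewrite /dep; case: (v == r) => //; case: (par v == r). Qed.

Lemma ptree_sub : ptree \subset complete_edges T.
Proof.
apply/subsetP=> e /imsetP[v]; rewrite !inE => nv ->.
by rewrite cards2 (eq_sym v) par_neq.
Qed.

Definition up x := if x == r then [::] else if par x == r then [:: r] else [:: par x; r].
Definition down y := if y == r then [::] else if par y == r then [:: y] else [:: par y; y].

Lemma up_path x : path (adj ptree) x (up x) /\ last x (up x) = r.
Proof.
rewrite /up; case: (eqVneq x r) => [->|nx] //.
case: (eqVneq (par x) r) => [e|np] /=.
  by split=> //; rewrite andbT; have := adj_par nx; rewrite e.
split=> //; rewrite adj_par //= andbT.
by have := adj_par np; rewrite par_dep.
Qed.

Lemma down_path y : path (adj ptree) r (down y) /\ last r (down y) = y.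
Proof.
rewrite /down; case: (eqVneq y r) => [->|ny] //.
case: (eqVneq (par y) r) => [e|np] /=.
  by split=> //; rewrite andbT adj_sym; have := adj_par ny; rewrite e.
split=> //; rewrite andbT; apply/andP; split; last by rewrite adj_sym adj_par.
by have := adj_par np; rewrite par_dep // adj_sym.
Qed.

Lemma ptree_diam : diam_le ptree 4.
Proof.
move=> x y; exists (up x ++ down y).
have [p1 l1] := up_path x; have [p2 l2] := down_path y.
split.
- rewrite size_cat /up /down.
  by case: (x == r); case: (par x == r); case: (y == r); case: (par y == r).
- by rewrite cat_path p1 l1.
- by rewrite last_cat l1.
Qed.

Lemma ptree_conn : connected_sp ptree.
Proof.
move=> x y; have [s [_ ps ls]] := ptree_diam x y.
by apply/connectP; exists s.
Qed.

Lemma ptree_acyc : acyclic ptree.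
Proof.
move=> [s [us ss cs]].
have [m ms mmax] : exists2 m, m \in s & forall w, w \in s -> dep w <= dep m.
  case: (boolP (has (fun w => dep w == 2) s)) => [/hasP[m ms /eqP d2]|/hasPn n2].
    by exists m => // w _; rewrite d2 dep_le2.
  case: (boolP (has (fun w => dep w == 1) s)) => [/hasP[m ms /eqP d1]|/hasPn n1].
    exists m => // w ws; rewrite d1.
    by have := dep_le2 w; case: (dep w) (n2 w ws) => [|[|[|]]].
  case: s ss us cs n2 n1 => [|m s'] // _ _ _ n2 n1.
  exists m; first by rewrite inE eqxx.
  move=> w ws; have := dep_le2 w.
  by case: (dep w) (n2 w ws) (n1 w ws) => [|[|[|]]].
case/splitPr: ms us ss cs mmax => s1 s2 us ss cs mmax.
have cs' : cycle (adj ptree) (m :: (s2 ++ s1)).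
  by rewrite -(rot_cycle (size s1)) rot_size_cat in cs.
have us' : uniq (m :: (s2 ++ s1)).
  by rewrite -(rot_uniq (size s1)) rot_size_cat in us.
have ss' : 2 <= size (s2 ++ s1) by move: ss; rewrite !size_cat /= addnS addnC.
have mem' : forall w, w \in s2 ++ s1 -> dep w <= dep m.
  by move=> w; rewrite mem_cat => /orP[] h; apply: mmax; rewrite mem_cat inE h ?orbT.
move: cs' us' ss' mem'; case: (s2 ++ s1) => [|t0 t'] //.
case/lastP: t' => [|t'' tl] // cs' us' _ mem'.
move: cs'; rewrite /= rcons_path last_rcons => /andP[h0 /andP[_ hl]].
have P1 : t0 = par m.
  case: (adj_ptree h0) => [[_ //]|[nt0 e]].
  have := dep_par nt0; rewrite -e ltnNge mem' // inE eqxx //.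
have P2 : tl = par m.
  case: (adj_ptree hl) => [[ntl e]|[_ //]].
  have := dep_par ntl; rewrite -e ltnNge mem' // inE mem_rcons inE eqxx orbT //.
move: us'; rewrite /= P1 P2 mem_rcons inE eqxx /=.
by rewrite andbF.
Qed.

Lemma ptree_span : spanning_tree ptree.
Proof. by split; [exact: ptree_sub | split; [exact: ptree_conn | exact: ptree_acyc]]. Qed.
End PTree.

Lemma ext_max (T : finType) (A : {set T}) (r : rel T) :
  (forall x y z, x \in A -> y \in A -> z \in A -> r x y -> r y z -> r x z) ->
  (forall x, x \in A -> ~~ r x x) ->
  forall m0, m0 \in A -> exists2 m, m \in A & forall w, w \in A -> ~~ r m w.
Proof.
move=> tr irr m0 m0A.
suff : forall n m, m \in A -> #|[set w in A | r m w]| <= n ->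
  exists2 m, m \in A & forall w, w \in A -> ~~ r m w by apply; first exact: m0A.
elim=> [|n IH] m mA.
  rewrite leqn0 => /eqP /cards0_eq E; exists m => // w wA.
  by apply/negP=> rmw; move: (in_set0 w); rewrite -E inE wA rmw.
move=> hc.
case: (boolP [exists w in A, r m w]) => [/exists_inP[w wA rmw]|/exists_inP nw].
  apply: (IH w wA); rewrite -ltnS; apply: leq_trans hc.
  apply: proper_card; apply/properP; split.
    by apply/subsetP=> z; rewrite !inE => /andP[zA rwz]; rewrite zA (tr m w z).
  by exists w; rewrite !inE ?wA ?rmw ?(negbTE (irr w wA)).
by exists m => // w wA; apply/negP=> rmw; apply: nw; exists w.
Qed.

Section Star. Variables (T : finType) (b : T).
Definition starE : {set {set T}} := [set e : {set T} | (#|e| == 2) && (b \in e)].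
Lemma adj_star x y : adj starE x y = (x != y) && ((x == b) || (y == b)).
Proof.
rewrite /adj inE cards2 !inE.
case: (x != y) => //=. by rewrite (eq_sym b x) (eq_sym b y).
Qed.
Lemma star_acyc : acyclic starE.
Proof.
move=> [s [us ss cs]].
have key : forall x y r, x != b -> y != b -> ~~ cycle (adj starE) (x :: y :: r).
  move=> x y r nx ny /=; rewrite adj_star (negbTE nx) (negbTE ny) /=.
  by rewrite andbF.
have key2 : forall t, b \notin t -> 2 <= size t -> ~~ cycle (adj starE) t.
  move=> [|x [|y t]] //=; rewrite !inE !negb_or => /and3P[nx ny _] _.
  by apply: key; rewrite eq_sym.
case: (boolP (b \in s)) => hb; last by move: (key2 s hb (ltnW ss)); rewrite cs.
case/splitPr: hb us ss cs => s1 s2 us ss cs.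
have: cycle (adj starE) (rot (size s1).+1 (s1 ++ b :: s2)) by rewrite rot_cycle.
have -> : rot (size s1).+1 (s1 ++ b :: s2) = (s2 ++ s1) ++ [:: b].
  rewrite /rot -cat_rcons drop_size_cat ?size_rcons // take_size_cat ?size_rcons //.
  by rewrite -cats1 catA.
move: us; rewrite cat_uniq /= => /and4P[_ /norP[nb1 _] nb2 _].
have nb : b \notin s2 ++ s1 by rewrite mem_cat negb_or nb1 nb2.
have sz : 2 <= size (s2 ++ s1) by move: ss; rewrite !size_cat /= addnS addnC.
move: nb sz; case: (s2 ++ s1) => [|x [|y t]] //; rewrite !inE !negb_or => /and3P[nx ny _] _.
rewrite eq_sym in nx; rewrite eq_sym in ny.
move=> c; move: (key x y (t ++ [:: b]) nx ny); by rewrite c.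
Qed.

Lemma star_sub : starE \subset complete_edges T.
Proof. by apply/subsetP=> e; rewrite !inE => /andP[]. Qed.

Lemma star_diam : diam_le starE 4.
Proof.
move=> x y.
case: (eqVneq x y) => [<-|nxy]; first by exists [::].
case: (eqVneq x b) => [ex|nx].
  by exists [:: y]; rewrite /= adj_star nxy ex eqxx.
case: (eqVneq y b) => [ey|ny].
  by exists [:: y]; rewrite /= adj_star nxy ey eqxx orbT.
exists [:: b; y]; rewrite /= !adj_star nx eqxx orbT /=.
by rewrite eq_sym ny.
Qed.

Lemma star_conn : connected_sp starE.
Proof.
move=> x y; have [s [_ ps ls]] := star_diam x y.
by apply/connectP; exists s.
Qed.

Lemma star_simple (R : realType) (p : T -> R * R) : simple_geo p starE.
Proof.
move=> x y u v H1 H2 d; move: H1 H2; rewrite /starE !in_set => /andP[_ h1] /andP[_ h2].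
by move: (disjointFr d (x:=b)); rewrite !in_set h1 h2 => /(_ isT).
Qed.

Lemma star_T4 (R : realType) (p : T -> R * R) : T_le4 p starE.
Proof.
split; [split; [exact: star_sub | split; [exact: star_conn | exact: star_acyc]] | exact: star_simple | exact: star_diam].
Qed.
End Star.

Local Open Scope ring_scope.

Section Geo.
Variable R : realType.
Implicit Types P Q u v s t z : R * R.

Lemma det3_aff P Q u v (k : R) :
  det3 P Q ((1 - k) * u.1 + k * v.1, (1 - k) * u.2 + k * v.2) =
  (1 - k) * det3 P Q u + k * det3 P Q v.
Proof. rewrite /det3 /=; ring. Qed.

Lemma det3_swap P Q z : det3 Q P z = - det3 P Q z.
Proof. rewrite /det3; ring. Qed.

Lemma det3_P P Q : det3 P Q P = 0.
Proof. rewrite /det3; ring. Qed.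
Lemma det3_Q P Q : det3 P Q Q = 0.
Proof. rewrite /det3; ring. Qed.
Lemma det3_rot P u v : det3 P v u = - det3 P u v.
Proof. rewrite /det3; ring. Qed.

Lemma on_segment_sym u v z : on_segment u v z -> on_segment v u z.
Proof.
case=> k [/andP[k0 k1] ->]; exists (1 - k); split.
  by apply/andP; split; lra.
congr (_, _); ring.
Qed.

Lemma pos_comb (k X Y : R) : 0 <= k -> k <= 1 -> 0 < X -> 0 < Y -> 0 < (1-k)*X + k*Y.
Proof. move=> *; nra. Qed.

Lemma sepW P Q u v s t z :
  on_segment u v z -> on_segment s t z ->
  det3 P Q t = 0 -> det3 P Q s * det3 P Q u <= 0 ->
  0 < det3 P Q u * det3 P Q v -> False.
Proof.
case=> k1 [/andP[k10 k11] E1]; case=> k2 [/andP[k20 k21] E2] ht hsu huv.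
have h1 := det3_aff P Q u v k1; have h2 := det3_aff P Q s t k2.
rewrite -E1 in h1; rewrite -E2 ht mulr0 addr0 in h2.
set fu := det3 P Q u in hsu huv h1; set fv := det3 P Q v in huv h1.
set fs := det3 P Q s in hsu h2; set fz := det3 P Q z in h1 h2.
have A : fz * fu <= 0.
  rewrite h2 -mulrA; apply: mulr_ge0_le0; [rewrite subr_ge0 // | exact: hsu].
have B : 0 < fz * fu.
  rewrite h1 mulrDl -!mulrA.
  have fu2 : 0 < fu * fu.
    have nz : fu != 0 by apply: contraTneq huv => ->; rewrite mul0r ltxx.
    by rewrite lt0r mulf_neq0 //= -expr2 sqr_ge0.
  rewrite (mulrC fv fu); exact: pos_comb.
lra.
Qed.
End Geo.

Lemma plucker (R : realType) (A B U V W : R * R) :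
  det3 A B V * det3 A U W = det3 A U V * det3 A B W + det3 A V W * det3 A B U.
Proof. rewrite /det3; ring. Qed.

Lemma sign_aux (R : realType) (sv duw duv sw dvw su : R) :
  sv * duw = duv * sw + dvw * su -> 0 < sw * sv -> 0 < su * sv ->
  0 < duv -> 0 < dvw -> 0 < duw.
Proof.
move=> E h1 h2 h3 h4.
have H : 0 < sv * (sv * duw).
  rewrite E mulrDr !mulrA ![sv * _]mulrC -!mulrA.
  rewrite (mulrC sw sv) (mulrC su sv) in h1 h2.
  by apply: addr_gt0; apply: mulr_gt0.
have nz : sv != 0 by apply: contraTneq h1 => ->; rewrite mulr0 ltxx.
have s2 : 0 < sv * sv by rewrite lt0r mulf_neq0 //= -expr2 sqr_ge0.
rewrite mulrA in H.
by rewrite -(pmulr_rgt0 _ s2).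
Qed.

Lemma sqr_pos (R : realType) (x y : R) : x != 0 -> y != 0 -> (0 < x) = (0 < y) -> 0 < x * y.
Proof.
move=> nx ny; case: (ltrP 0 x) => hx; case: (ltrP 0 y) => hy //= _.
  by apply: mulr_gt0.
have hx' : x < 0 by rewrite lt_neqAle nx.
have hy' : y < 0 by rewrite lt_neqAle ny.
nra.
Qed.

Local Open Scope ring_scope.

Lemma neg_prod (R : realType) (x y : R) : x != 0 -> y != 0 -> (0 < x) != (0 < y) -> x * y <= 0.
Proof.
move=> nx ny; case: (ltrP 0 x) => hx; case: (ltrP 0 y) => hy //= _.
  by apply: mulr_ge0_le0; [exact: ltW|].
by apply: mulr_le0_ge0; [|exact: ltW].
Qed.

Lemma disj2 (T : finType) (x1 y1 x2 y2 : T) :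
  [disjoint [set x1; y1] & [set x2; y2]] ->
  [/\ x1 != x2, x1 != y2, y1 != x2 & y1 != y2].
Proof.
move=> d.
have h1 := disjointFr d (x:=x1); have h2 := disjointFr d (x:=y1).
rewrite !inE eqxx /= in h1; rewrite !inE eqxx orbT in h2.
have := h1 isT; have := h2 isT.
move=> /norP[c1 c2] /norP[a1 a2].
by split.
Qed.

Section Claim.
Variables (R : realType) (T : finType) (p : T -> R * R).
Hypothesis gp : general_position p.
Variables (a b : T).
Hypothesis nab : a != b.
Hypothesis hull : (forall z, 0 <= det3 (p a) (p b) (p z)) \/ (forall z, det3 (p a) (p b) (p z) <= 0).
Variable S : {set T}.
Hypothesis aS : a \in S.
Hypothesis bS : b \notin S.
Definition Yset := [set w | (w \notin S) && (w != b)].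
Variable y0 : T.
Hypothesis y0Y : y0 \in Yset.

Let sd z := det3 (p a) (p b) (p z).
Definition prec u v := 0 < det3 (p a) (p u) (p v).
Let good z := (z != a) && (z != b).

Lemma gpne x y z : x != y -> y != z -> x != z -> det3 (p x) (p y) (p z) != 0.
Proof. by move=> *; apply: gp.2. Qed.

Lemma sd_pos u v : good u -> good v -> 0 < sd u * sd v.
Proof.
move=> /andP[ua ub] /andP[va vb].
have nu : sd u != 0 by apply: gpne; rewrite // eq_sym.
have nv : sd v != 0 by apply: gpne; rewrite // eq_sym.
case: hull => H.
  by apply: mulr_gt0; rewrite lt_neqAle eq_sym ?nu ?nv H.
have hu : sd u < 0 by rewrite lt_neqAle nu H.
have hv : sd v < 0 by rewrite lt_neqAle nv H.
nra.
Qed.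

Lemma prec_trans u v w : good u -> good v -> good w -> prec u v -> prec v w -> prec u w.
Proof.
move=> gu gv gw h1 h2; rewrite /prec.
apply: (sign_aux (plucker (p a) (p b) (p u) (p v) (p w))) => //.
  exact: sd_pos.
exact: sd_pos.
Qed.

Lemma prec_irr u : ~~ prec u u.
Proof. by rewrite /prec det3_Q ltxx. Qed.

Lemma prec_asym u v : prec u v -> ~~ prec v u.
Proof. rewrite /prec det3_rot oppr_gt0 => h; rewrite -leNgt; exact: ltW. Qed.

Lemma prec_total u v : u != v -> u != a -> v != a -> prec u v || prec v u.
Proof.
move=> nuv ua va; rewrite /prec (det3_rot (p a) (p u) (p v)) oppr_gt0.
have : det3 (p a) (p u) (p v) != 0 by apply: gpne; rewrite // eq_sym.
set D := det3 _ _ _; move=> nz.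
by case: (ltrgtP D 0) nz => h //= _; rewrite h ?orbT.
Qed.

Lemma Y_good y : y \in Yset -> good y.
Proof.
rewrite inE => /andP[yS yb]; rewrite /good yb andbT.
by apply: contraNneq yS => ->.
Qed.

Lemma Y_na y : y \in Yset -> y != a.
Proof. by move/Y_good/andP=> []. Qed.

Lemma S_good x : x \in S -> x != a -> good x.
Proof. by move=> xS xa; rewrite /good xa; apply: contraTneq xS => ->. Qed.

Lemma YS_neq y x : y \in Yset -> x \in S -> y != x.
Proof. by rewrite inE => /andP[yS _] xS; apply: contraNneq yS => ->. Qed.

Definition LX x := [set y in Yset | prec y x].
Definition ymax x := [pick y in LX x | [forall w in LX x, ~~ prec y w]].
Definition ymin := [pick y in Yset | [forall w in Yset, ~~ prec w y]].
Definition yx x := match ymax x with Some y => y | None => odflt a ymin end.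

Lemma yx_spec x : x \in S -> x != a -> yx x \in Yset /\
  ((prec (yx x) x /\ forall w, w \in Yset -> prec w x -> ~~ prec (yx x) w) \/
   ((forall w, w \in Yset -> ~~ prec w x) /\ forall w, w \in Yset -> ~~ prec w (yx x))).
Proof.
move=> xS xa; rewrite /yx /ymax.
case: pickP => [y /andP[yL /forall_inP hm] | none].
  move: yL; rewrite inE => /andP[yY pyx]; split=> //; left; split=> // w wY pwx.
  by apply: hm; rewrite inE wY.
have nL : forall w, w \in Yset -> ~~ prec w x.
  move=> w wY; apply/negP=> pwx.
  have wL : w \in LX x by rewrite inE wY.
  have [m mL mmax] := ext_max (A := LX x) (r := prec)
    (fun u v z hu hv hz => prec_trans (Y_good (setIdP hu).1) (Y_good (setIdP hv).1) (Y_good (setIdP hz).1))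
    (fun u _ => prec_irr u) wL.
  by move: (none m); rewrite mL /=; move/negbT/negP; apply; apply/forall_inP.
rewrite /ymin; case: pickP => [y /andP[yY /forall_inP hm] | none2].
  by split=> //; right; split.
have [m mY mmin] := ext_max (A := Yset) (r := fun u v => prec v u)
    (fun u v z hu hv hz h1 h2 => prec_trans (Y_good hz) (Y_good hv) (Y_good hu) h2 h1)
    (fun u _ => prec_irr u) y0Y.
by move: (none2 m); rewrite mY /=; move/negbT/negP; case; apply/forall_inP.
Qed.

Lemma key_i x y' : x \in S -> x != a -> y' \in Yset -> y' != yx x ->
  prec y' x = prec y' (yx x).
Proof.
move=> xS xa y'Y ne.
have [mY [[pmx mmax]|[nL nm]]] := yx_spec xS xa.
  case: (boolP (prec y' x)) => h.
    have := mmax y' y'Y h => nmy.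
    have := prec_total ne (Y_na y'Y) (Y_na mY) ; rewrite (negbTE nmy) orbF => ->//.
  have hx : prec x y'.
    have := prec_total (YS_neq y'Y xS) (Y_na y'Y) xa; rewrite (negbTE h) /= => //.
  have := prec_trans (Y_good mY) (S_good xS xa) (Y_good y'Y) pmx hx.
  by move/prec_asym/negbTE ->.
by rewrite (negbTE (nL y' y'Y)) (negbTE (nm y' y'Y)).
Qed.

Lemma key_ii x x' : x \in S -> x != a -> x' \in S -> x' != a ->
  yx x != yx x' -> prec (yx x) (yx x') ->
  (prec (yx x') x != prec (yx x') x') || (prec (yx x) x != prec (yx x) x').
Proof.
move=> xS xa x'S x'a ne pyy.
have [yY _] := yx_spec xS xa.
have [y'Y [[py'x' _]|[_ nm]]] := yx_spec x'S x'a.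
  have ne' : yx x' != yx x by rewrite eq_sym.
  by rewrite (key_i xS xa y'Y ne') (negbTE (prec_asym pyy)) py'x'.
by move: (nm _ yY); rewrite pyy.
Qed.

Definition par v := if v == a then a else if v \in S then yx v else a.

Lemma par_neq v : v != a -> par v != v.
Proof.
move=> va; rewrite /par (negbTE va); case: ifP => vS; last by rewrite eq_sym.
have [yY _] := yx_spec vS va; exact: YS_neq.
Qed.

Lemma par_dep v : v != a -> par v != a -> par (par v) = a.
Proof.
move=> va; rewrite /par (negbTE va); case: ifP => vS; last by rewrite eqxx.
have [yY _] := yx_spec vS va; move: yY; rewrite inE => /andP[yS _] ya.
by rewrite (negbTE ya) (negbTE yS).
Qed.

Lemma hull_nc u w z : good u -> good w ->
  on_segment (p b) (p a) z -> on_segment (p u) (p w) z -> False.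
Proof.
move=> gu gw h1 h2.
apply: (sepW (P := p a) (Q := p b) h2 h1 (det3_P _ _)); first by rewrite det3_Q mul0r.
exact: sd_pos.
Qed.

Lemma ya_nc y x z : y \in Yset -> x \in S -> x != a -> y != yx x ->
  on_segment (p y) (p a) z -> on_segment (p x) (p (yx x)) z -> False.
Proof.
move=> yY xS xa ne h1 h2.
have [mY _] := yx_spec xS xa.
apply: (sepW (P := p a) (Q := p y) h2 h1 (det3_P _ _)); first by rewrite det3_Q mul0r.
apply: sqr_pos.
- by apply: gpne; rewrite ?(YS_neq yY xS) // eq_sym ?(Y_na yY) ?xa.
- by apply: gpne; rewrite ?ne // eq_sym ?(Y_na yY) ?(Y_na mY).
- exact: (key_i xS xa yY ne).
Qed.

Lemma xx_aux x x' z : x \in S -> x != a -> x' \in S -> x' != a ->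
  yx x != yx x' -> prec (yx x) (yx x') ->
  on_segment (p x) (p (yx x)) z -> on_segment (p x') (p (yx x')) z -> False.
Proof.
move=> xS xa x'S x'a ne pyy h1 h2.
have [yY _] := yx_spec xS xa; have [y'Y _] := yx_spec x'S x'a.
have nz : forall y u, y \in Yset -> u \in S -> u != a -> det3 (p a) (p y) (p u) != 0.
  move=> y u yY' uS ua.
  by apply: gpne; rewrite ?(YS_neq yY' uS) // eq_sym ?(Y_na yY') ?ua.
have nz2 : forall y y', y \in Yset -> y' \in Yset -> y != y' -> det3 (p a) (p y) (p y') != 0.
  move=> y1 y2 h1' h2' n12.
  by apply: gpne; rewrite ?n12 // eq_sym ?(Y_na h1') ?(Y_na h2').
case/orP: (key_ii xS xa x'S x'a ne pyy) => h.
- apply: (sepW (P := p a) (Q := p (yx x')) h1 h2 (det3_Q _ _)).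
    by apply: neg_prod; [exact: nz|exact: nz|rewrite eq_sym].
  apply: sqr_pos; [exact: nz| |].
    by apply: nz2; rewrite // eq_sym.
  by apply: key_i; rewrite // eq_sym.
- apply: (sepW (P := p a) (Q := p (yx x)) h2 h1 (det3_Q _ _)).
    by apply: neg_prod; [exact: nz|exact: nz|].
  apply: sqr_pos; [exact: nz| |].
    exact: nz2.
  exact: key_i.
Qed.

Lemma xx_nc x x' z : x \in S -> x != a -> x' \in S -> x' != a ->
  yx x != yx x' ->
  on_segment (p x) (p (yx x)) z -> on_segment (p x') (p (yx x')) z -> False.
Proof.
move=> xS xa x'S x'a ne h1 h2.
have [yY _] := yx_spec xS xa; have [y'Y _] := yx_spec x'S x'a.
case/orP: (prec_total ne (Y_na yY) (Y_na y'Y)) => pyy.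
  exact: (xx_aux xS xa x'S x'a ne pyy h1 h2).
by apply: (xx_aux x'S x'a xS xa _ pyy h2 h1); rewrite eq_sym.
Qed.
Lemma par_b : par b = a.
Proof. by rewrite /par eq_sym (negbTE nab) (negbTE bS). Qed.

Lemma par_Y y : y \notin S -> par y = a.
Proof. by move=> yS; rewrite /par (negbTE yS); case: ifP. Qed.

Lemma par_S x : x \in S -> x != a -> par x = yx x.
Proof. by move=> xS xa; rewrite /par (negbTE xa) xS. Qed.

Lemma nc v1 v2 z : v1 != a -> v2 != a ->
  [disjoint [set v1; par v1] & [set v2; par v2]] ->
  on_segment (p v1) (p (par v1)) z -> on_segment (p v2) (p (par v2)) z -> False.
Proof.
move=> v1a v2a d h1 h2.
case: (eqVneq v1 b) => [e1|v1b].
  subst v1; rewrite par_b in d h1; have [c1 c2 c3 c4] := disj2 d.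
  by apply: (hull_nc _ _ h1 h2); rewrite /good eq_sym ?c1 ?c2 ?c3 ?c4 ?v2a // eq_sym.
case: (eqVneq v2 b) => [e2|v2b].
  subst v2; rewrite par_b in d h2; have [c1 c2 c3 c4] := disj2 d.
  by apply: (hull_nc _ _ h2 h1); rewrite /good ?c1 ?c2 ?c3 ?c4 ?v1a.
have [c1 c2 c3 c4] := disj2 d.
case: (boolP (v1 \in S)) => v1S; case: (boolP (v2 \in S)) => v2S.
- rewrite !par_S // in c4 h1 h2; exact: (xx_nc v1S v1a v2S v2a c4 h1 h2).
- have v2Y : v2 \in Yset by rewrite inE v2S v2b.
  rewrite par_S // in c3 h1; rewrite par_Y // in h2.
  by apply: (ya_nc v2Y v1S v1a _ h2 h1); rewrite eq_sym.
- have v1Y : v1 \in Yset by rewrite inE v1S v1b.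
  rewrite par_S // in c2 h2; rewrite par_Y // in h1.
  exact: (ya_nc v1Y v2S v2a c2 h1 h2).
- by rewrite !par_Y // eqxx in c4.
Qed.

Lemma ptree_simple : simple_geo p (ptree a par).
Proof.
have getv : forall x y, [set x; y] \in ptree a par -> exists v, [/\ v != a,
   [set x; y] = [set v; par v] & forall z, on_segment (p x) (p y) z -> on_segment (p v) (p (par v)) z].
  move=> x y /imsetP[v]; rewrite !inE => va E; exists v; split=> // z.
  have nvp : v != par v by rewrite eq_sym par_neq.
  case: (set2_eq nvp E) => [[-> ->] //|[-> ->]]; exact: on_segment_sym.
move=> x y u v hxy huv d [z [s1 s2]].
have [v1 [v1a E1 f1]] := getv _ _ hxy; have [v2 [v2a E2 f2]] := getv _ _ huv.
rewrite E1 E2 in d.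
exact: (nc v1a v2a d (f1 _ s1) (f2 _ s2)).
Qed.

Lemma claimC (B : {set {set T}}) : [set a; b] \notin B ->
  (forall u w, u \in S -> w \in Yset -> [set u; w] \notin B) ->
  blocks B (T_le4 p) -> False.
Proof.
move=> nab' hS blk.
have T4 : T_le4 p (ptree a par).
  split; [exact: (ptree_span par_neq par_dep) | exact: ptree_simple | exact: (ptree_diam par_dep)].
have [e /setIP[eB /imsetP[v]]] := blk _ T4; rewrite !inE => va ev; subst e.
case: (eqVneq v b) => [vb|vb].
  by subst v; move: eB; rewrite par_b setUC (negbTE nab').
case: (boolP (v \in S)) => vS.
  have [yY _] := yx_spec vS va.
  by move: eB; rewrite par_S // (negbTE (hS _ _ vS yY)).
have vY : v \in Yset by rewrite inE vS vb.
by move: eB; rewrite par_Y // setUC (negbTE (hS _ _ aS vY)).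
Qed.
End Claim.


End Aux.
Import Aux.

Lemma star_blocks (T : finType) (b a : T) : a != b ->
  blocks (starE b) (fun E => spanning_tree E).
Proof.
move=> ab E [Esub [conn _]].
have := conn b a; case/connectP=> s ps ls.
case: s ps ls => [|s0 s] /=; first by move=> _ e; rewrite e eqxx in ab.
case/andP=> h0 _ _.
have h0' : [set b; s0] \in E := h0.
exists [set b; s0]; rewrite inE h0' /starE andbT inE; apply/andP; split.
  by have := subsetP Esub _ h0'; rewrite inE.
by rewrite !inE eqxx.
Qed.

Lemma star_card (T : finType) (b : T) : (#|starE b| <= #|T|.-1)%N.
Proof.
rewrite -(cardsC1 b); apply: leq_trans (leq_imset_card (fun v => [set b; v]) _).
apply: subset_leq_card; apply/subsetP=> e; rewrite inE => /andP[c2 be].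
have : [set b] \proper e.
  by rewrite properEcard sub1set be cards1 (eqP c2).
case/properP=> _ [v ve]; rewrite inE => vb.
apply/imsetP; exists v; first by rewrite !inE.
apply/eqP; rewrite eq_sym eqEcard (eqP c2) cards2 eq_sym vb leqnn andbT.
by rewrite subUset !sub1set be ve.
Qed.

Section Main.
Variables (R : realType) (T : finType) (p : T -> R * R) (B : {set {set T}}).
Hypothesis gp : general_position p.
Hypothesis blk : blocks B (T_le4 p).
Variables (a b : T).
Hypothesis nab : a != b.
Hypothesis hull : (forall z, (0 <= det3 (p a) (p b) (p z))%R) \/ (forall z, (det3 (p a) (p b) (p z) <= 0)%R).
Hypothesis abB : [set a; b] \notin B.

Lemma grow k : k <= #|T| - 2 -> exists S : {set T},
  [/\ a \in S, b \notin S, #|S| = k.+1 & k <= #|[set e in B | e \subset S]|].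
Proof.
elim: k => [_|k IH hk].
  by exists [set a]; rewrite !inE eqxx cards1 eq_sym nab.
have [S [aS bS cS kS]] := IH (ltnW hk).
have [y0 y0Y] : exists y0, y0 \in Yset b S.
  apply/existsP; apply: contraTT hk => /existsPn ny.
  have : [set: T] \subset b |: S.
    apply/subsetP=> w _; have := ny w; rewrite !inE negb_and !negbK.
    by case/orP=> ->; rewrite ?orbT.
  move/subset_leq_card; rewrite cardsT cardsU1 cS bS => h.
  by rewrite -leqNgt; lia.
case: (boolP [exists u, exists w, [&& u \in S, w \in Yset b S & [set u; w] \in B]]).
  case/existsP=> u /existsP[w /and3P[uS wY uwB]].
  move: (wY); rewrite inE => /andP[wS wb].
  exists (w |: S); split.
  - by rewrite !inE aS orbT.
  - by rewrite !inE negb_or eq_sym wb bS.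
  - by rewrite cardsU1 wS cS.
  - have sub : [set u; w] |: [set e in B | e \subset S] \subset [set e in B | e \subset w |: S].
      apply/subsetP=> e; rewrite !inE => /orP[/eqP ->|/andP[eB eS]].
        by rewrite uwB subUset !sub1set !inE eqxx uS !orbT.
      by rewrite eB (subset_trans eS) // subsetUr.
    apply: leq_trans (subset_leq_card sub).
    by rewrite cardsU1 inE negb_and subUset !sub1set (negbTE wS) andbF orbT add1n ltnS.
move/existsPn=> nex; exfalso.
apply: (claimC gp nab hull aS bS y0Y abB _ blk) => u w uS wY.
apply/negP=> uwB; have := nex u; move/existsPn/(_ w); rewrite uS wY uwB.
by [].
Qed.

Lemma core : blocker (T_le4 p) B -> degree B b = 1.
Proof.
case=> Bsub _ minim.
have n2 : 2 <= #|T|.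
  by have := max_card [set a; b]; rewrite cards2 nab.
have [S [aS bS cS kS]] := grow (leqnn (#|T| - 2)).
have [e /setIP[eB eSt]] := blk (star_T4 b p).
have d1 : 0 < degree B b.
  apply/card_gt0P; exists e; rewrite inE eB /=.
  by move: eSt; rewrite inE => /andP[].
have cB : #|B| <= #|T|.-1.
  apply: leq_trans (star_card b).
  apply: minim; first exact: star_sub.
  move=> E [sp _ _]; have := star_blocks nab; apply; exact: sp.
have hID := cardsID [set f : {set T} | b \in f] B.
have dE : degree B b = #|B :&: [set f : {set T} | b \in f]| by rewrite /degree setIdE.
have sub : [set e in B | e \subset S] \subset B :\: [set f : {set T} | b \in f].
  apply/subsetP=> f; rewrite !inE => /andP[fB fS]; rewrite fB andbT.
  by apply: contraNN bS => bf; apply: (subsetP fS).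
have := subset_leq_card sub.
rewrite -dE in hID; rewrite -subn1 in cB.
move=> h; move: hID cB h kS d1 n2.
move: (degree B b) (#|B|) (#|T|) (#|B :\: [set f : {set T} | b \in f]|) (#|[set e in B | e \subset S]|).
move=> d nB n x y; lia.
Qed.
End Main.

Theorem lemma1 (R : realType) (T : finType) (p : T -> R * R)
  (B : {set {set T}}) (a b c : T) :
  general_position p ->
  blocker (T_le4 p) B ->
  boundary_vertex p b ->
  a != c -> boundary_edge p a b -> boundary_edge p b c ->
  ([set a; b] \notin B \/ [set b; c] \notin B) ->
  degree B b = 1%N.
Proof.
move=> gp bl _ _ [nab hab] [nbc hbc] hor.
have blk : blocks B (T_le4 p) by case: bl.
case: hor => h.
  exact: (core gp blk nab hab h bl).
have ncb : c != b by rewrite eq_sym.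
have hcb : (forall z, (0 <= det3 (p c) (p b) (p z))%R) \/ (forall z, (det3 (p c) (p b) (p z) <= 0)%R).
  case: hbc => H; [right|left] => z; rewrite det3_swap.
    by rewrite oppr_le0.
  by rewrite oppr_ge0.
have h' : [set c; b] \notin B by rewrite setUC.
exact: (core gp blk ncb hcb h' bl).
Qed.
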